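(* Let $\alpha$ be an algebraic number. If the minimal polynomial of $\alpha$ over $\mathbb{Q}$ contains a nonzero term of odd degree, then $\mathbb{Q}(\alpha) = \mathbb{Q}(\alpha^2)$. Consequently, for any real number field $K$, the set of generators $\alpha$ of $K$ (i.e. $\mathbb{Q}(\alpha)=K$) whose minimal polynomial contains a nonzero term of odd degree is dense in $\mathbb{R}$.
   Context: A real number field is a field $K\subset\mathbb{R}$ with $[K:\mathbb{Q}]<\infty$. *)

(* Defs.v *)
From mathcomp Require Import all_boot all_order all_algebra all_field.
From mathcomp Require Import reals.
Set Implicit Arguments. Unset Strict Implicit. Unset Printing Implicit Defensive.
Import Order.TTheory GRing.Theory Num.Theory.
Local Open Scope ring_scope.

Definition is_subfield (F : fieldType) (S : F -> Prop) : Prop :=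
  [/\ S 0, S 1,
      (forall x y, S x -> S y -> S (x - y)),
      (forall x y, S x -> S y -> S (x * y)) &
      (forall x, S x -> x != 0 -> S x^-1)].

Definition Qadj (F : fieldType) (a : F) : F -> Prop :=
  fun x => forall S : F -> Prop, is_subfield S -> S a -> S x.

Definition algebraic_over_Q (F : fieldType) (a : F) : Prop :=
  exists p : {poly rat}, p != 0 /\ root (map_poly ratr p) a.

Definition is_minpoly (F : fieldType) (a : F) (p : {poly rat}) : Prop :=
  [/\ p \is monic, root (map_poly ratr p) a &
      forall q : {poly rat}, q != 0 -> root (map_poly ratr q) a ->
        (size p <= size q)%N].

Definition minpoly_has_odd_term (F : fieldType) (a : F) : Prop :=
  exists p : {poly rat}, is_minpoly a p /\ exists i : nat, odd i /\ p`_i != 0.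

(* K is a real number field: a subfield of R of finite dimension over Q
   (spanned over Q by a finite list of elements). *)
Definition real_number_field (R : realType) (K : R -> Prop) : Prop :=
  is_subfield K /\
  exists s : seq R, forall x, K x ->
    exists c : seq rat, size c = size s /\
      x = \sum_(i < size s) ratr c`_i * s`_i.

(* Main.v *)
Require Import Defs.
From mathcomp Require Import all_boot all_order all_algebra all_field.
From mathcomp Require Import reals.
From mathcomp Require Import lra zify ring.
From Stdlib Require Import Classical.
Import Order.TTheory GRing.Theory Num.Theory.
Local Open Scope ring_scope.
Set Implicit Arguments. Unset Strict Implicit.

Section Gen.
Variable F : numFieldType.

Definition inP (y x : F) := exists q : {poly rat}, (map_poly ratr q).[y] = x.
Definition annih (y : F) (p : {poly rat}) := p != 0 /\ root (map_poly ratr p) y.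
Definition mindeg (y : F) (d : nat) :=
  (exists p, annih y p /\ size p = d) /\ forall q, annih y q -> (d <= size q)%N.

Lemma sf_add (S : F -> Prop) x y : is_subfield S -> S x -> S y -> S (x + y).
Proof.
case=> S0 S1 Ssub Smul Sinv Sx Sy.
have := Ssub _ _ Sx (Ssub _ _ S0 Sy); by rewrite sub0r opprK.
Qed.

Lemma sf_opp (S : F -> Prop) x : is_subfield S -> S x -> S (- x).
Proof. case=> S0 S1 Ssub Smul Sinv Sx; have := Ssub _ _ S0 Sx; by rewrite sub0r. Qed.

Lemma sf_nat (S : F -> Prop) n : is_subfield S -> S n%:R.
Proof.
move=> hS; elim: n => [|n IH]; first by case: hS.
by rewrite -addn1 natrD; apply: sf_add => //; case: hS.
Qed.

Lemma sf_int (S : F -> Prop) (z : int) : is_subfield S -> S z%:~R.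
Proof.
move=> hS; case: z => n; first exact: sf_nat.
by rewrite NegzE mulrNz; apply: sf_opp => //; apply: sf_nat.
Qed.

Lemma sf_ratr (S : F -> Prop) (c : rat) : is_subfield S -> S (ratr c).
Proof.
move=> hS; rewrite /ratr; have [S0 S1 Ssub Smul Sinv] := hS.
apply: Smul; first exact: sf_int.
apply: Sinv; first exact: sf_int.
by rewrite intr_eq0 denq_neq0.
Qed.

Lemma sf_horner (S : F -> Prop) (q : {poly rat}) y :
  is_subfield S -> S y -> S (map_poly ratr q).[y].
Proof.
move=> hS Sy; have [S0 S1 Ssub Smul Sinv] := hS.
elim/poly_ind: q => [|q c IH]; first by rewrite rmorph0 horner0.
rewrite rmorphD rmorphM /= map_polyX map_polyC !hornerE.
by apply: sf_add => //; [apply: Smul | apply: sf_ratr].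
Qed.

Lemma inP_sf (S : F -> Prop) y x : is_subfield S -> S y -> inP y x -> S x.
Proof. by move=> hS Sy [q <-]; apply: sf_horner. Qed.

Lemma inP_comp z g x : inP z g -> inP g x -> inP z x.
Proof.
move=> [q0 <-] [q <-]; exists (q \Po q0).
by rewrite map_comp_poly horner_comp.
Qed.

Lemma inP_X y : inP y y.
Proof. by exists 'X; rewrite map_polyX hornerX. Qed.

Lemma inP_shift y t x : inP y x -> inP (y + ratr t) x.
Proof.
move=> hx; apply: inP_comp hx; exists ('X - t%:P).
by rewrite rmorphB /= map_polyX map_polyC !hornerE addrK.
Qed.

Lemma inP_exp z g i : inP z g -> inP z (g ^+ i).
Proof. by move=> [q <-]; exists (q ^+ i); rewrite rmorphXn horner_exp. Qed.


Lemma lin_dep m k (v : 'I_m -> F) (w : 'I_k -> F) (A : 'I_m -> 'I_k -> rat) :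
  (k < m)%N -> (forall i, v i = \sum_j ratr (A i j) * w j) ->
  exists c : 'I_m -> rat, (exists i, c i != 0) /\ \sum_i ratr (c i) * v i = 0.
Proof.
move=> km hv; pose M : 'M[rat]_(m, k) := \matrix_(i, j) A i j.
have : kermx M != 0.
  rewrite kermx_eq0 -row_leq_rank -ltnNge.
  exact: leq_ltn_trans (rank_leq_col M) km.
case/matrix0Pn => i0 [j0 nz]; exists (fun i => kermx M i0 i); split.
  by exists j0.
under eq_bigr do rewrite hv mulr_sumr.
rewrite exchange_big /=; apply: big1 => j _.
have h0 : (kermx M *m M) i0 j = 0 by rewrite mulmx_ker mxE.
rewrite mxE in h0.
transitivity ((@ratr F) (\sum_i kermx M i0 i * M i j) * w j).
  rewrite rmorph_sum /= mulr_suml; apply: eq_bigr => i _.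
  by rewrite rmorphM /= /M mxE mulrA.
by rewrite h0 rmorph0 mul0r.
Qed.

Lemma reduce y d x : mindeg y d -> inP y x ->
  exists r : 'I_(d.-1) -> rat, x = \sum_j ratr (r j) * y ^+ j.
Proof.
move=> [[m [[nzm rm] sm]] _] [q <-].
exists (fun j => (q %% m)`_j).
rewrite {1}(divp_eq q m) rmorphD rmorphM /= !hornerE (eqP rm) mulr0 add0r.
rewrite (@horner_coef_wide _ d.-1); last first.
  rewrite size_map_poly -ltnS -sm prednK ?ltn_modp //.
  by rewrite sm; case: (d) sm => // /eqP; rewrite size_poly_eq0 (negPf nzm).
by apply: eq_bigr => j _; rewrite coef_map.
Qed.

Lemma mindeg_exists y p : annih y p -> exists d, mindeg y d.
Proof.
move=> hp; suff: forall N p, annih y p -> (size p <= N)%N -> exists d, mindeg y d.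
  by move/(_ (size p) p hp (leqnn _)).
elim=> [|N IH] {hp}p hp sp.
  by move: hp sp => [nz _]; rewrite leqn0 size_poly_eq0 (negPf nz).
case: (classic (exists q, annih y q /\ (size q < size p)%N)).
  by move=> [q [hq sq]]; apply: (IH q hq); rewrite -ltnS (leq_trans sq).
move=> nq; exists (size p); split; first by exists p.
move=> q hq; rewrite leqNgt; apply/negP => sq; apply: nq; by exists q.
Qed.

Lemma mindeg_gt0 y d : mindeg y d -> (0 < d)%N.
Proof. by move=> [[p [[nz _] <-]] _]; rewrite size_poly_gt0. Qed.

Lemma grow y z x d d' : mindeg y d -> mindeg z d' -> inP z y -> inP z x ->
  ~ inP y x -> (d < d')%N.
Proof.
move=> my mz zy zx nyx; rewrite ltnNge; apply/negP => d'd.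
have := mindeg_gt0 my; case: d my d'd => // d0 my d'd _.
pose v (i : 'I_d0.+1) := if (i < d0)%N then y ^+ i else x.
have hv : forall i, exists r : 'I_(d'.-1) -> rat, v i = \sum_j ratr (r j) * z ^+ j.
  move=> i; apply: reduce mz _; rewrite /v; case: ifP => _ //.
  exact: inP_exp.
have [A hA] := fin_all_exists hv.
have [|c [[i0 nzc] sc]] := lin_dep (w := fun j : 'I_(d'.-1) => z ^+ j) _ hA.
  by case: (d') d'd => //.
rewrite big_ord_recr /= {2}/v /= ltnn in sc.
pose pc := \poly_(i < d0) c (inord i).
have epc : (map_poly ratr pc).[y] = \sum_(i < d0) ratr (c (widen_ord (leqnSn d0) i)) * v (widen_ord (leqnSn d0) i).
  rewrite (@horner_coef_wide _ d0); last by rewrite size_map_poly size_poly.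
  apply: eq_bigr => i _; rewrite coef_map coef_poly ltn_ord /v /= ltn_ord.
  have -> : (inord i : 'I_d0.+1) = widen_ord (leqnSn d0) i.
    by apply: val_inj => /=; rewrite inordK // leqW.
  by [].
have spc : (size pc <= d0)%N by apply: size_poly.
case: (eqVneq (c ord_max) 0) => cm.
  move: sc; rewrite cm rmorph0 mul0r addr0 -epc => rt.
  have nzpc : pc != 0.
    have lt : (i0 < d0)%N.
      rewrite ltn_neqAle -ltnS ltn_ord andbT; apply/eqP => e.
      have ei : i0 = ord_max by apply: val_inj.
      by move: nzc; rewrite ei cm eqxx.
    apply/eqP => pc0; move: nzc.
    have := congr1 (fun p : {poly rat} => p`_i0) pc0.
    rewrite /= coef_poly lt coef0.
    by rewrite (_ : inord i0 = i0) => [->|]; rewrite ?eqxx //; apply: val_inj; rewrite /= inordK.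
  have [_ mn] := my; have := mn pc (conj nzpc (introT eqP rt)).
  by rewrite leqNgt ltnS spc.
apply: nyx; exists (- (c ord_max)^-1 *: pc).
rewrite linearZ /= hornerZ epc.
have -> : \sum_(i < d0) ratr (c (widen_ord (leqnSn d0) i)) * v (widen_ord (leqnSn d0) i)
   = - (ratr (c ord_max) * x) by apply/eqP; rewrite -addr_eq0 sc.
rewrite rmorphN rmorphV ?unitfE //= mulrN mulNr opprK mulrA mulVf ?mul1r //.
by rewrite fmorph_eq0.
Qed.


Lemma sf_exp (S : F -> Prop) y i : is_subfield S -> S y -> S (y ^+ i).
Proof.
move=> hS Sy; have [S0 S1 Ssub Smul Sinv] := hS.
by elim: i => [|i IH]; rewrite ?expr0 // exprS; apply: Smul.
Qed.

Section Bound.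
Variables (K : F -> Prop) (s : seq F).
Hypothesis hK : is_subfield K.
Hypothesis hs : forall x, K x -> exists c : seq rat, size c = size s /\
      x = \sum_(i < size s) ratr c`_i * s`_i.

Lemma bound y : K y -> exists p, annih y p /\ (size p <= (size s).+1)%N.
Proof.
move=> Ky; pose v (i : 'I_(size s).+1) := y ^+ i.
have hv : forall i, exists r : 'I_(size s) -> rat,
    v i = \sum_j ratr (r j) * (fun j : 'I_(size s) => s`_j) j.
  move=> i; rewrite /v; have [c [_ ->]] := hs (sf_exp i hK Ky).
  by exists (fun j => c`_j).
have [A hA] := fin_all_exists hv.
have [c [[i0 nzc] sc]] := lin_dep (leqnn _) hA.
pose p := \poly_(i < (size s).+1) c (inord i).
exists p; split; last exact: size_poly.
split.
  apply/eqP => p0; move: nzc.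
  have := congr1 (fun p : {poly rat} => p`_i0) p0.
  rewrite /= coef_poly ltn_ord coef0.
  by rewrite (_ : inord i0 = i0) => [->|]; rewrite ?eqxx //; apply: val_inj; rewrite /= inordK.
apply/eqP; rewrite (@horner_coef_wide _ (size s).+1); last by rewrite size_map_poly size_poly.
rewrite -[RHS]sc; apply: eq_bigr => i _; rewrite coef_map coef_poly ltn_ord.
by rewrite (_ : inord i = i) //; apply: val_inj; rewrite /= inordK.
Qed.

Lemma step y d : K y -> mindeg y d -> ~ (forall x, K x -> inP y x) ->
  exists z d', K z /\ mindeg z d' /\ (d < d')%N /\ (d' <= (size s).+1)%N.
Proof.
move=> Ky my nall.
have [x [Kx nx]] : exists x, K x /\ ~ inP y x.
  apply: NNPP => h; apply: nall => x Kx; apply: NNPP => nx; apply: h; by exists x.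
have [px [[nzpx rx] _]] := bound Kx.
have [py [[nzpy ry] _]] := bound Ky.
have [n [zx zy]] := pchar0_PET nzpx rx nzpy ry (@pchar_num _).
set z := y *+ n - x in zx zy.
have Kz : K z.
  have [S0 S1 Ssub Smul Sinv] := hK; apply: Ssub => //.
  by rewrite -mulr_natr; apply: Smul => //; apply: sf_nat.
have [pz [hpz spz]] := bound Kz.
have [d' md'] := mindeg_exists hpz.
exists z, d'; split => //; split => //; split.
  exact: grow my md' zy zx nx.
by have [_ mn] := md'; apply: leq_trans (mn _ hpz) spz.
Qed.

Lemma gen_exists : exists g, K g /\ forall x, K x -> inP g x.
Proof.
have K0 : K 0 by case: hK.
have [p0 [hp0 _]] := bound K0.
have [d0 md0] := mindeg_exists hp0.
suff: forall N y d, K y -> mindeg y d -> ((size s).+1 - d <= N)%N ->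
    exists g, K g /\ forall x, K x -> inP g x.
  by move/(_ _ 0 d0 K0 md0 (leqnn _)).
elim=> [|N IH] y d Ky my hN; (case: (classic (forall x, K x -> inP y x)) => hall;
  first by exists y).
  have [z [d' [_ [_ [dd' d's]]]]] := step Ky my hall.
  exfalso; move: hN dd' d's; lia.
have [z [d' [Kz [mz [dd' d's]]]]] := step Ky my hall.
apply: (IH z d') => //; move: hN dd' d's; lia.
Qed.

End Bound.


Lemma minpoly_exists y p : annih y p -> exists f, is_minpoly y f.
Proof.
move=> hp; have [d [[q [[nzq rq] sq]] mn]] := mindeg_exists hp.
exists ((lead_coef q)^-1 *: q); split.
- by rewrite monicE lead_coefZ mulVf // lead_coef_eq0.
- by rewrite linearZ /= rootZ ?fmorph_eq0 ?invr_eq0 ?lead_coef_eq0.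
- move=> r nzr rr; rewrite size_scale ?invr_eq0 ?lead_coef_eq0 // sq.
  exact: mn (conj nzr rr).
Qed.

Lemma minpoly_unique (y : F) f g : is_minpoly y f -> is_minpoly y g -> f = g.
Proof.
move=> [mf rf nf] [mg rg ng].
have nzf := monic_neq0 mf; have nzg := monic_neq0 mg.
have sfg : size f = size g by apply/eqP; rewrite eqn_leq (nf g nzg rg) (ng f nzf rf).
apply/eqP; rewrite -subr_eq0; apply/negP => /negP nz.
have : (size f <= size (f - g)%R)%N by apply: nf => //; rewrite /root rmorphB /= hornerD hornerN (eqP rf) (eqP rg) subr0.
apply/negP; rewrite -ltnNge.
have f0 : (0 < size f)%N by rewrite size_poly_gt0.
rewrite -(prednK f0) ltnS; apply/leq_sizeP => j hj.
rewrite coefB; case: (ltngtP j (size f).-1) => [|jf|jf].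
- by rewrite ltnNge hj.
- by rewrite !nth_default // ?sfg -?(prednK f0) // -sfg -(prednK f0).
- move: (monicP mf) (monicP mg); rewrite !lead_coefE -sfg -jf => -> ->.
  by rewrite subrr.
Qed.

Lemma minpoly_shift (y : F) t f : is_minpoly y f ->
  is_minpoly (y + ratr t) (f \Po ('X - t%:P)).
Proof.
move=> [mf rf nf]; split.
- rewrite monicE lead_coef_comp ?size_XsubC // lead_coefXsubC expr1n mulr1.
  exact/eqP/monicP.
- by rewrite /root map_comp_poly horner_comp rmorphB /= map_polyX map_polyC !hornerE addrK.
- move=> q nzq rq; rewrite size_comp_poly2 ?size_XsubC //.
  have -> : size q = size (q \Po ('X + t%:P)) by rewrite size_comp_poly2 ?size_XaddC.
  apply: nf; first by rewrite comp_poly2_eq0 ?size_XaddC.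
  by rewrite /root map_comp_poly horner_comp rmorphD /= map_polyX map_polyC !hornerE.
Qed.

Lemma even_horner (f : {poly rat}) x : (forall i, odd i -> f`_i = 0) ->
  (map_poly ratr f).[- x] = (map_poly (@ratr F) f).[x].
Proof.
move=> ev; rewrite !horner_coef; apply: eq_bigr => i _.
rewrite coef_map /=; case: (boolP (odd i)) => oi.
  by rewrite ev // rmorph0 !mul0r.
by rewrite exprNn -signr_odd (negPf oi) expr0 mul1r.
Qed.

Lemma shift_good y p t1 t2 : annih y p -> t1 != t2 ->
  minpoly_has_odd_term (y + ratr t1) \/ minpoly_has_odd_term (y + ratr t2).
Proof.
move=> hp t12; apply: NNPP => /not_or_and [n1 n2].
have [f mf] := minpoly_exists hp.
have ev t : ~ minpoly_has_odd_term (y + ratr t) ->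
    forall w, (map_poly ratr f).[w] = (map_poly (@ratr F) f).[- w - ratr t *+ 2].
  move=> nt w.
  have ev0 : forall i, odd i -> (f \Po ('X - t%:P))`_i = 0.
    move=> i oi; apply: NNPP => nz; apply: nt; exists (f \Po ('X - t%:P)).
    split; first exact: minpoly_shift.
    by exists i; split => //; apply/eqP.
  have := even_horner (w + ratr t) ev0.
  rewrite !map_comp_poly !horner_comp rmorphB /= map_polyX map_polyC !hornerE.
  by rewrite addrK => <-; rewrite opprD mulr2n opprD addrA.
pose h : F := ratr t1 *+ 2 - ratr t2 *+ 2.
have per : forall w, (map_poly ratr f).[w + h] = (map_poly (@ratr F) f).[w].
  move=> w; rewrite (ev t1 n1 w) (ev t2 n2 (w + h)).
  have -> : - (w + h) - (@ratr F t2) *+ 2 = - w - (@ratr F t1) *+ 2.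
    rewrite /h !opprD opprK -!addrA; congr (_ + _).
    ring.
  by [].
have nzh : h != 0.
  rewrite /h -mulrnBl mulrn_eq0 /= subr_eq0.
  by rewrite (inj_eq (fmorph_inj _)).
have rk : forall k, root (map_poly ratr f) (y + k%:R * h).
  elim=> [|k IH]; first by rewrite mul0r addr0; case: mf.
  by rewrite /root -addn1 natrD mulrDl mul1r addrA per.
have nzf : map_poly (@ratr F) f != 0.
  by rewrite map_poly_eq0; case: mf => /monic_neq0.
pose rs := mkseq (fun k => y + k%:R * h) (size (map_poly (@ratr F) f)).
have : (size rs < size (map_poly (@ratr F) f))%N.
  apply: max_poly_roots nzf _ _.
    by apply/allP => z /mapP [k _ ->].
  apply: mkseq_uniq => k l /addrI /(mulIf nzh) /eqP; rewrite eqr_nat => /eqP //.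
by rewrite size_mkseq ltnn.
Qed.

End Gen.

Lemma sq_gen (F : numFieldType) (a : F) : minpoly_has_odd_term a ->
  forall S : F -> Prop, is_subfield S -> S (a ^+ 2) -> S a.
Proof.
move=> [p [[mp rp np] [i [oi nzi]]]] S hS Sa2.
have [S0 S1 Ssub Smul Sinv] := hS.
pose E := even_poly p; pose O := odd_poly p.
have dec : (map_poly ratr p).[a] =
    (map_poly ratr E).[a ^+ 2] + (map_poly (@ratr F) O).[a ^+ 2] * a.
  rewrite -{1}(poly_even_odd p) rmorphD rmorphM /= !map_comp_poly map_polyX map_polyXn.
  by rewrite hornerD hornerM !horner_comp hornerXn hornerX.
have nzO : O != 0.
  apply/eqP => O0; move: nzi; have := coef_odd_poly p i./2.
  rewrite -/O O0 coef0 => /esym.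
  have -> : (i./2).*2.+1 = i by rewrite -[in RHS](odd_double_half i) oi add1n.
  by move=> ->; rewrite eqxx.
have nzOX : O \Po 'X^2 != 0 by rewrite comp_poly_eq0 ?size_polyXn ?nzO.
have so : (size (O \Po 'X^2) < size p)%N.
  have h1 := size_comp_poly O ('X^2 : {poly rat}); rewrite size_polyXn /= in h1.
  have h2 := size_odd_poly p; rewrite -/O in h2.
  have h3 : (0 < size (O \Po 'X^2))%N by rewrite size_poly_gt0.
  have h4 : (0 < size O)%N by rewrite size_poly_gt0.
  move: h1 h2 h3 h4; rewrite -divn2 -!subn1; move: (size (O \Po _)) (size O) (size p) => A B C; lia.
have o0 : (map_poly (@ratr F) O).[a ^+ 2] != 0.
  apply/negP => /eqP o0.
  have := np (O \Po 'X^2) nzOX.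
  rewrite /root map_comp_poly horner_comp map_polyXn hornerXn o0 eqxx => /(_ isT).
  by rewrite leqNgt so.
have ea : (map_poly (@ratr F) O).[a ^+ 2] * a = - (map_poly (@ratr F) E).[a ^+ 2].
  by apply/eqP; rewrite eq_sym eqr_oppLR -subr_eq0 opprK -dec.
rewrite -[a](mulKf o0) ea; apply: Smul.
  by apply: Sinv => //; apply: sf_horner.
by apply: sf_opp => //; apply: sf_horner.
Qed.

Lemma part1 (F : numFieldType) (a : F) : minpoly_has_odd_term a ->
  forall x, Qadj a x <-> Qadj (a ^+ 2) x.
Proof.
move=> ho x; split => hx S hS Sa.
- by apply: hx => //; apply: (sq_gen ho hS Sa).
- apply: hx => //; have [_ _ _ Smul _] := hS; rewrite expr2; exact: Smul.
Qed.

Lemma part2 (R : realType) (K : R -> Prop) : real_number_field K ->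
  forall u v : R, u < v ->
  exists a : R, u < a < v /\ (forall x, Qadj a x <-> K x) /\ minpoly_has_odd_term a.
Proof.
move=> [hK [s hs]] u v uv.
have [g [Kg hg]] := gen_exists hK hs.
have [p [hp _]] := bound hK hs Kg.
pose δ := (v - u) / 2.
have δ0 : 0 < δ by rewrite /δ; lra.
have h0 : g - δ < g by lra.
have [r0] := rat_in_itvoo h0; rewrite in_itv /= => /andP [r0a r0b].
have h1 : u < v - δ by rewrite /δ; lra.
have [r1] := rat_in_itvoo h1.
rewrite in_itv /= => /andP [r1a r1b].
have [r2] := rat_in_itvoo r1a; rewrite in_itv /= => /andP [r2a r2b].
have fin : forall r : rat, u < ratr r < v - δ ->
    minpoly_has_odd_term (g + ratr (r - r0)) ->
    exists a : R, u < a < v /\ (forall x, Qadj a x <-> K x) /\ minpoly_has_odd_term a.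
  move=> r /andP [ra rb] ho; exists (g + ratr (r - r0)); split; last split => //.
    rewrite rmorphB /=; apply/andP; split; lra.
  move=> x; split.
    apply => //; apply: sf_add => //; exact: sf_ratr.
  move=> Kx S hS Sa; apply: inP_sf hS Sa _; apply: inP_shift; exact: hg.
have t12 : r1 - r0 != r2 - r0.
  apply/negP => /eqP /addIr e; move: r2b; rewrite e; lra.
case: (shift_good hp t12) => ho; apply: fin ho; apply/andP; split; lra.
Qed.

Theorem claim3p5 :
  (forall a : algC, algebraic_over_Q a -> minpoly_has_odd_term a ->
     forall x : algC, Qadj a x <-> Qadj (a ^+ 2) x) /\
  (forall (R : realType) (K : R -> Prop), real_number_field K ->
     forall u v : R, u < v ->
       exists a : R, u < a < v /\ (forall x, Qadj a x <-> K x) /\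
                     minpoly_has_odd_term a).
Proof.
split.
  by move=> a _ ho x; apply: part1.
by move=> R K hK u v uv; apply: part2.
Qed.
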